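(* Let $r\ge2$, $\ell\ge1$, let $C=(w_1,\dots,w_{2\ell+1})$ be a semi-valid tuple in $\Omega_n$, and let $i$ and $1\le k\le\ell$ be such that $C$ is $(i,k)$-consecutive. If each of $C_{i,k,-1}$, $C_{i,k,0}$, $C_{i,k,1}$ is semi-valid, then $$|H_n^{(r)}(C)|\ge\min\{|H_n^{(r)}(C_{i,k,-1})|,|H_n^{(r)}(C_{i,k,1})|\}.$$ Moreover, this inequality is strict if $r\ge3$ and $n\ge3r-5$.
   Context: $\Omega_n=\{v_0,\dots,v_{n-1}\}$ with cyclic order $v_0<\dots<v_{n-1}<v_0$, indices of $v$ mod $n$. For distinct vertices $u,w$, $(u,w)$ is the set of vertices strictly between $u$ and $w$ moving clockwise from $u$ to $w$, and $[u,w]=(u,w)\cup\{u,w\}$. A tuple $C=(w_1,\dots,w_{2\ell+1})$ of distinct vertices is semi-valid if $w_1<w_3<\dots<w_{2\ell+1}<w_2<w_4<\dots<w_{2\ell}<w_1$ in clockwise cyclic order; indices of the $w$'s are taken mod $2\ell+1$. $H_n^{(r)}(C)=\{e\in\binom{\Omega_n}{r}: e\cap[w_p,w_{p-1}]\neq\emptyset\ \forall p\in\{1,\dots,2\ell+1\}\}$. $C$ is $(i,k)$-consecutive if there is $j$ with $w_{i+2s}=v_{j+s}$ for all $0\le s<k$. In that case, for an integer $m$, $C_{i,k,m}=(w'_1,\dots,w'_{2\ell+1})$ is the tuple with $w'_{i+2s}=v_{j+s+m}$ for $0\le s<k$ and $w'_p=w_p$ for all other $p$ (so $C_{i,k,0}=C$).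 *)

(* Defs.v *)
From mathcomp Require Import all_boot all_order all_algebra.
Set Implicit Arguments. Unset Strict Implicit. Unset Printing Implicit Defensive.

(* Vertices of Omega_n are 'I_n (v_a is the ordinal with value a mod n);
   a (2l+1)-tuple C = (w_1,...,w_{2l+1}) is a function 'I_(2l+1) -> 'I_n,
   where the paper's w_p is  w (idx l p), i.e. position p mod (2l+1). *)

Definition idx (l p : nat) : 'I_(l.*2.+1) := inord (p %% l.*2.+1).

Section Defs.
Variables (n l : nat).
Notation tupleT := ('I_(l.*2.+1) -> 'I_n).

Definition wat (w : tupleT) (p : nat) : 'I_n := w (idx l p).

(* cyclic clockwise order a_1 < a_2 < ... < a_m < a_1 of distinct vertices:
   some rotation of the list is strictly increasing *)
Definition cyclic_ordered (s : seq nat) : bool :=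
  uniq s && has (fun q => sorted ltn (rot q s)) (iota 0 (size s)).

Definition semi_valid (w : tupleT) : bool :=
  cyclic_ordered
    ([seq val (wat w (2 * j + 1)) | j <- iota 0 l.+1] ++
     [seq val (wat w (2 * j + 2)) | j <- iota 0 l]).

Definition cdist (u x : 'I_n) : nat := (x + n - u) %% n.

Definition open_int (u v : 'I_n) : {set 'I_n} :=
  [set x : 'I_n | (0 < cdist u x) && (cdist u x < cdist u v)].

Definition closed_int (u v : 'I_n) : {set 'I_n} :=
  open_int u v :|: [set u; v].

Definition H (r : nat) (w : tupleT) : {set {set 'I_n}} :=
  [set e : {set 'I_n} | (#|e| == r) &&
     [forall p : 'I_(l.*2.+1),
        e :&: closed_int (wat w p) (wat w (p + l.*2)) != set0]].

Definition consecutive_at (w : tupleT) (i k j : nat) : Prop :=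
  forall s, s < k -> val (wat w (i + 2 * s)) = (j + s) %% n.

Definition shiftC (w : tupleT) (i k j : nat) (m : int) : tupleT :=
  fun p => match [pick s : 'I_k | p == idx l (i + 2 * s)] with
           | Some s => insubd (w p) `|(((j + s)%:Z + m) %% n%:Z)%Z|%N
           | None => w p
           end.

End Defs.

(* Main.v *)
Require Import Defs.
From mathcomp Require Import all_boot all_order all_algebra.
From mathcomp Require Import zify ring.
From Stdlib Require Import FunctionalExtensionality.
Set Implicit Arguments. Unset Strict Implicit. Unset Printing Implicit Defensive.

Definition F n a b := if a <= b then b - a else b + n - a.
Definition g k t := if t <= k then t.+1 else if t == k.+1 then 0 else t.

Lemma eqarith n k a b x : k.+1 < n -> a < n -> b < n -> x < n ->
  a != k.+1 -> b != k.+1 -> x != k.+1 ->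
  (F n a x <= F n a b) = (F n (g k a) (g k x) <= F n (g k a) (g k b)).
Proof. rewrite /F /g => *. repeat case: ifP; lia. Qed.

Lemma g_low kk t : t <= kk -> g kk t = t.+1.
Proof. by rewrite /g => ->. Qed.
Lemma g_high kk t : kk.+1 < t -> g kk t = t.
Proof. move=> h; rewrite /g; case: ifP => h1; first lia. case: ifP => h2 //; lia. Qed.

Lemma mon_ar1 nn kk a b x : 1 <= kk -> kk.+1 < nn -> a < nn -> b < nn -> x < nn ->
  [|| (a <= kk.-1) && (kk.+1 < b), (kk.+1 < a) && (b <= kk.-1) | (kk.+1 < a) && (kk.+1 < b)] ->
  F nn a x <= F nn a b ->
  (F nn (g kk a) x <= F nn (g kk a) (g kk b)) || (F nn (g kk a) kk.+1 <= F nn (g kk a) (g kk b)).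
Proof.
move=> h1 h2 ha hb hx /or3P [] /andP [c1 c2].
- rewrite (g_low (t := a)) ?(g_high (t := b)) //; last lia.
  rewrite /F; repeat case: ifP; lia.
- rewrite (g_high (t := a)) ?(g_low (t := b)) //; last lia.
  rewrite /F; repeat case: ifP; lia.
- rewrite (g_high (t := a)) ?(g_high (t := b)) //.
  by move=> ->.
Qed.

Lemma mon_ar2 nn kk a b x : 1 <= kk -> kk.+1 < nn -> a < nn -> b < nn -> x < nn ->
  [|| (1 <= a <= kk) && (kk.+1 < b), (kk.+1 < a) && (1 <= b <= kk) | (kk.+1 < a) && (kk.+1 < b)] ->
  F nn (g kk a) x <= F nn (g kk a) (g kk b) ->
  (F nn a x <= F nn a b) || (F nn a 0 <= F nn a b).
Proof.
move=> h1 h2 ha hb hx /or3P [] /andP [c1 c2].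
- rewrite (g_low (t := a)) ?(g_high (t := b)) //; last lia.
  rewrite /F; repeat case: ifP; lia.
- rewrite (g_high (t := a)) ?(g_low (t := b)) //; last lia.
  rewrite /F; repeat case: ifP; lia.
- rewrite (g_high (t := a)) ?(g_high (t := b)) //.
  by move=> ->.
Qed.

Lemma hit1_ar nn u v bb : u < nn -> v < nn -> bb < nn ->
  [|| u == 1, (u <= bb) && (bb <= v) | v < u] ->
  [|| F nn u 0 <= F nn u v, F nn u 1 <= F nn u v | F nn u bb <= F nn u v].
Proof. rewrite /F; repeat case: ifP; lia. Qed.

Lemma hit2_ar nn u v aa : u < nn -> v < nn -> aa < nn -> 1 <= v ->
  ((u <= aa) && (aa <= v)) || ((v < u) && (1 < u)) ->
  (F nn u 1 <= F nn u v) || (F nn u aa <= F nn u v).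
Proof. rewrite /F; repeat case: ifP; lia. Qed.

Lemma Fd n o u x : o < n -> u < n -> x < n -> F n u x = F n (F n o u) (F n o x).
Proof. rewrite /F => *. repeat case: ifP; lia. Qed.

Lemma mod2 a n : a < n + n -> a %% n = if a < n then a else a - n.
Proof.
move=> h2; case: (ltnP a n) => h1; first by rewrite modn_small.
have -> : a = (a - n) + n by lia.
by rewrite modnDr modn_small; lia.
Qed.

Lemma cdistE n (u x : 'I_n) : cdist u x = F n u x.
Proof.
rewrite /cdist /F; case: leqP => h.
  have -> : x + n - u = (x - u) + n by lia.
  by rewrite modnDr modn_small //; have := ltn_ord x; lia.
by rewrite modn_small //; have := ltn_ord x; lia.
Qed.

Lemma in_ci n (u v x : 'I_n) : (x \in closed_int u v) = (cdist u x <= cdist u v).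
Proof.
rewrite /closed_int /open_int !inE !cdistE /F.
have := ltn_ord u; have := ltn_ord v; have := ltn_ord x.
case: (eqVneq x u) => [->|hxu]; first by rewrite leqnn; case: ifP; lia.
case: (eqVneq x v) => [->|hxv]; first by rewrite leqnn /= orbT.
rewrite /= orbF.
have hxu' : (x : nat) != u by [].
have hxv' : (x : nat) != v by [].
move: hxu' hxv' => /eqP hxu' /eqP hxv'.
repeat case: ifP; lia.
Qed.

Lemma extend (T : finType) (A K : {set T}) r :
  A \subset K -> #|A| <= r -> r <= #|K| -> exists e : {set T}, [/\ A \subset e, e \subset K & #|e| = r].
Proof.
move Hm: (r - #|A|) => m; elim: m A Hm => [|m IH] A Hm sAK hA hK.
  by exists A; split => //; apply/eqP; rewrite eqn_leq hA; lia.
have : A \proper K.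
  rewrite properEcard sAK /=; lia.
case/properP => _ [x xK xA].
have H1 : r - #|x |: A| = m by rewrite cardsU1 xA /=; lia.
have H2 : x |: A \subset K by rewrite subUset sub1set xK.
have H3 : #|x |: A| <= r by rewrite cardsU1 xA /=; lia.
have [e [h1 h2 h3]] := IH (x |: A) H1 H2 H3 hK.
by exists e; split => //; apply: subset_trans h1; apply: subsetUr.
Qed.

Section Main.
Variables (n l : nat) (w : 'I_(l.*2.+1) -> 'I_n) (i k j : nat).
Local Notation L := (l.*2.+1).
Local Notation tupleT := ('I_(l.*2.+1) -> 'I_n).

Lemma LP : 0 < L. Proof. by []. Qed.

Lemma exists_q b p : exists2 q, q < L & p %% L = (b + 2 * q) %% L.
Proof.
have LP : 0 < L by [].
set X := p + (L - b %% L).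
exists ((X * l.+1) %% L); first by rewrite ltn_pmod.
rewrite -modnDmr modnMmr modnDmr.
have e1 : 2 * (X * l.+1) = X * L + X by rewrite -mul2n; ring.
have -> : b + 2 * (X * l.+1) = (X + b %/ L) * L + p + L.
  rewrite e1 mulnDl.
  have := divn_eq b L; have := ltn_pmod b LP. rewrite /X; lia.
by rewrite -addnA modnMDl modnDr.
Qed.

Lemma idxE p : val (idx l p) = p %% L.
Proof. by rewrite /idx; apply: inordK; rewrite ltn_pmod. Qed.

Lemma wat_mod (C : tupleT) p q : p %% L = q %% L -> wat C p = wat C q.
Proof. by rewrite /wat /idx => ->. Qed.

Lemma wat_ord (C : tupleT) (p : 'I_L) : wat C p = C p.
Proof. rewrite /wat; congr C; apply: val_inj; by rewrite idxE modn_small. Qed.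

Lemma wat_L (C : tupleT) p : wat C (p + L) = wat C p.
Proof. by apply: wat_mod; rewrite modnDr. Qed.

Definition yS (C : tupleT) := [seq val (wat C (2 * u + 1)) | u <- iota 0 L].

Lemma S_eq (C : tupleT) :
  [seq val (wat C (2 * j + 1)) | j <- iota 0 l.+1] ++
  [seq val (wat C (2 * j + 2)) | j <- iota 0 l] = yS C.
Proof.
rewrite /yS.
have -> : L = l.+1 + l by rewrite -addnn; lia.
rewrite iotaD map_cat; congr (_ ++ _).
rewrite add0n -[l.+1]addn0 iotaDl -map_comp; apply: eq_map => u /=.
congr val; apply: wat_mod.
have -> : 2 * (l.+1 + (0 + u)) + 1 = (2 * u + 2) + l.*2.+1 by rewrite -addnn; lia.
by rewrite modnDr.
Qed.

Lemma size_yS (C : tupleT) : size (yS C) = L.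
Proof. by rewrite size_map size_iota. Qed.

Lemma nth_yS (C : tupleT) u : u < L -> nth 0 (yS C) u = val (wat C (2 * u + 1)).
Proof. by move=> hu; rewrite (nth_map 0) ?size_iota // nth_iota. Qed.

Lemma sv_uniq (C : tupleT) : semi_valid C -> uniq (yS C).
Proof. by rewrite /semi_valid S_eq /cyclic_ordered => /andP []. Qed.

Lemma sv_inj (C : tupleT) p q : semi_valid C -> wat C p = wat C q -> p %% L = q %% L.
Proof.
move=> /sv_uniq hu.
have [up hup ep] := exists_q 1 p.
have [uq huq eq] := exists_q 1 q.
rewrite (wat_mod C ep) (wat_mod C eq) => hw.
have : nth 0 (yS C) up = nth 0 (yS C) uq by rewrite !nth_yS // !(addnC _ 1) hw.
move/eqP; rewrite nth_uniq ?size_yS // => /eqP Hu.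
by rewrite ep eq Hu.
Qed.

Lemma sv_size (C : tupleT) : semi_valid C -> L <= n.
Proof.
move=> /sv_uniq hu.
have := uniq_leq_size hu (s2 := iota 0 n).
rewrite size_yS size_iota; apply => x /mapP [u _ ->].
by rewrite mem_iota /= ltn_ord.
Qed.

Lemma sv_sorted (C : tupleT) : semi_valid C -> exists q0, forall t, t.+1 < L ->
  val (wat C (2 * (q0 + t) + 1)) < val (wat C (2 * (q0 + t.+1) + 1)).
Proof.
rewrite /semi_valid S_eq /cyclic_ordered => /andP [_ /hasP [q0]].
rewrite size_yS mem_iota /= => hq0 hs.
exists q0.
set y := fun u => val (wat C (2 * u + 1)).
have yL u : y (L + u) = y u.
  rewrite /y; congr val; apply: wat_mod.
  have -> : 2 * (L + u) + 1 = 2 * L + (2 * u + 1) by lia.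
  by rewrite modnMDl.
have E : rot q0 (yS C) = [seq y u | u <- iota q0 L].
  rewrite /yS -map_rot /rot drop_iota take_iota add0n.
  have -> : minn q0 L = q0 by apply/minn_idPl; lia.
  have -> : iota q0 L = iota q0 (L - q0) ++ iota (q0 + (L - q0)) q0.
    by rewrite -iotaD; congr iota; lia.
  rewrite !map_cat; congr (_ ++ _).
  have -> : q0 + (L - q0) = L + 0 by lia.
  by rewrite iotaDl -map_comp; apply: eq_map => u /=; rewrite yL.
move: hs; rewrite E => /(sortedP 0) hs t ht.
have := hs t; rewrite size_map size_iota => /(_ ht).
by rewrite !(nth_map 0) ?size_iota // ?nth_iota //; lia.
Qed.

Hypotheses (Hk1 : 1 <= k) (Hkl : k <= l) (Hcons : consecutive_at w i k j)
  (Hw : semi_valid w)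
  (Hsm : semi_valid (shiftC w i k j (-1)%R))
  (Hs0 : semi_valid (shiftC w i k j 0%R))
  (Hs1 : semi_valid (shiftC w i k j 1%R)).

Definition blk p := [exists s : 'I_k, p %% L == (i + 2 * s) %% L].

Lemma blk_uniq s s' : s < k -> s' < k -> (i + 2 * s) %% L = (i + 2 * s') %% L -> s = s'.
Proof.
move=> hs hs' /eqP; rewrite eqn_modDl !modn_small; try lia.
Qed.

Lemma blk_both p : blk p -> ~~ blk (p + l.*2).
Proof.
case/existsP=> s /eqP hs; apply/negP => /existsP [s' /eqP hs'].
move: hs'; rewrite -modnDml hs modnDml -addnA => /eqP.
rewrite eqn_modDl (modn_small (m := 2 * s')); last by have := ltn_ord s'; lia.
rewrite mod2; last by have := ltn_ord s; lia.
have := ltn_ord s; have := ltn_ord s'; case: ifP => hh /= *; lia.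
Qed.

Lemma blk_i : blk i.
Proof. by apply/existsP; exists (Ordinal Hk1); rewrite muln0 addn0. Qed.

Definition Cm (m : int) := shiftC w i k j m.

Lemma npos : 0 < n.
Proof. by have := ltn_ord (w ord0); apply: leq_ltn_trans. Qed.

Lemma shift_blk (m : int) e s : m = (e%:Z - 1)%R -> e <= 2 -> s < k ->
  val (wat (Cm m) (i + 2 * s)) = (j + n - 1 + (s + e)) %% n.
Proof.
move=> hm he hs; rewrite /wat /Cm /shiftC; case: pickP => [s' /eqP hs' | hn]; last first.
  by have := hn (Ordinal hs); rewrite eqxx.
have ss : s' = s :> nat.
  apply: blk_uniq => //; move: (congr1 val hs'); rewrite !idxE => h.
  by rewrite h.
have np := npos.
rewrite val_insubd ss.
have -> : ((j + s)%:Z + m = (j + n - 1 + (s + e))%:Z - n%:Z)%R by rewrite hm; lia.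
rewrite -(modzDr ((j + n - 1 + (s + e))%:Z - n%:Z)%R n) GRing.subrK modz_nat absz_nat.
by rewrite ltn_pmod.
Qed.

Lemma shift_nblk (m : int) p : ~~ blk p -> wat (Cm m) p = wat w p.
Proof.
move=> hb; rewrite /wat /Cm /shiftC; case: pickP => [s' /eqP hs' | //].
case/negP: hb; apply/existsP; exists s'; apply/eqP.
by move: (congr1 val hs'); rewrite !idxE.
Qed.

Lemma w_blk s : s < k -> val (wat w (i + 2 * s)) = (j + n - 1 + (s + 1)) %% n.
Proof.
move=> hs; rewrite Hcons //; have np := npos.
have -> : j + n - 1 + (s + 1) = (j + s) + n by lia.
by rewrite modnDr.
Qed.

Lemma C0w : Cm 0%R = w.
Proof.
apply: functional_extensionality => p.
rewrite -(wat_ord (Cm 0%R)) -(wat_ord w).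
case: (boolP (blk p)) => [/existsP [s /eqP hs]|hb]; last by rewrite shift_nblk.
rewrite !(wat_mod _ hs); apply: val_inj.
by rewrite (shift_blk (e := 1)) // w_blk.
Qed.

Definition c0 := j + n - 1.
Definition V t : 'I_n := Ordinal (ltn_pmod (c0 + t) npos).
Definition o := V 0.
Definition d x := cdist o x.

Lemma d_lt x : d x < n.
Proof. by rewrite /d /cdist ltn_pmod // npos. Qed.

Lemma dE x : d x = F n (c0 %% n) x.
Proof. by rewrite /d cdistE /= addn0. Qed.

Lemma dV t : t < n -> d (V t) = t.
Proof.
move=> ht; rewrite dE /= -(modnDml c0 t n) (@mod2 (c0 %% n + t) n); last by have := ltn_pmod c0 npos; lia.
have := ltn_pmod c0 npos; rewrite /F; repeat case: ifP; lia.
Qed.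

Lemma Vd x : V (d x) = x.
Proof.
apply: val_inj => /=; rewrite dE /F -(modnDml c0).
have := ltn_pmod c0 npos; have := ltn_ord x.
case: ifP => h h1 h2.
  have -> : c0 %% n + (x - c0 %% n) = x by lia.
  by rewrite modn_small.
have -> : c0 %% n + (x + n - c0 %% n) = x + n by lia.
by rewrite modnDr modn_small.
Qed.

Lemma d_inj : injective d.
Proof. by move=> x y h; rewrite -(Vd x) h Vd. Qed.

Lemma cdist_d u x : cdist u x = F n (d u) (d x).
Proof. by rewrite !cdistE !dE; apply: Fd; rewrite ?ltn_pmod ?npos. Qed.

Lemma kn : k.+1 < n.
Proof. have := sv_size Hw; lia. Qed.

Definition pi x := if d x <= k then V (d x).+1 else if d x == k.+1 then V 0 else x.

Lemma d_pi x : d (pi x) = g k (d x).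
Proof.
have := kn; rewrite /pi /g; case: ifP => h hk.
  by rewrite dV; lia.
by case: ifP => // _; rewrite dV // npos.
Qed.

Lemma pi_inj : injective pi.
Proof.
move=> x y h; apply: d_inj; have := congr1 d h; rewrite !d_pi /g.
have := d_lt x; have := d_lt y; have := kn.
repeat case: ifP; lia.
Qed.

Lemma blkV (m : int) e s : m = (e%:Z - 1)%R -> e <= 2 -> s < k ->
  wat (Cm m) (i + 2 * s) = V (s + e).
Proof. by move=> *; apply: val_inj; rewrite (shift_blk (e := e)). Qed.

Lemma wblkV s : s < k -> wat w (i + 2 * s) = V (s + 1).
Proof. by move=> hs; apply: val_inj; rewrite w_blk. Qed.

Lemma nblk_d p : ~~ blk p -> k.+1 < d (wat w p).
Proof.
move=> hb; rewrite ltnNge; apply/negP => hle.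
set t := d (wat w p) in hle.
have [e [s [he hs ht]]] : exists e s, [/\ e <= 2, s < k & t = s + e].
  case: (posnP t) => [t0|tp].
    by exists 0, 0; rewrite t0; split => //.
  case: (leqP t k) => tk.
    by exists 1, t.-1; split; lia.
  by exists 2, k.-1; split; lia.
have [m [hm sv]] : exists m, m = (e%:Z - 1)%R /\ semi_valid (Cm m).
  case: e he {ht} => [|[|[|]]] // _.
  - by exists (-1)%R.
  - by exists 0%R.
  - by exists 1%R.
have := sv_inj (p := p) (q := i + 2 * s) sv.
rewrite shift_nblk // (blkV hm) // -ht /t Vd => /(_ erefl) hpq.
by case/negP: hb; apply/existsP; exists (Ordinal hs); rewrite hpq.
Qed.

Lemma rel_pi (m m' : int) e p : m = (e%:Z - 1)%R -> m' = (e.+1%:Z - 1)%R -> e <= 1 ->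
  wat (Cm m') p = pi (wat (Cm m) p) /\ d (wat (Cm m) p) != k.+1.
Proof.
move=> hm hm' he.
case: (boolP (blk p)) => [/existsP [s /eqP hs]|hb].
  rewrite !(wat_mod _ hs) (blkV hm) ?(blkV hm') //; try lia.
  have := ltn_ord s; have := kn => *.
  rewrite /pi dV; last by lia.
  rewrite ifT; last by lia.
  by split; [congr V; lia | apply/eqP; lia].
rewrite !shift_nblk //; have := nblk_d hb.
rewrite /pi => h; rewrite ifF; last by lia.
by rewrite ifF; [split => //; apply/eqP; lia | lia].
Qed.

Lemma e0m : ((-1)%R : int) = (0%:Z - 1)%R. Proof. by []. Qed.
Lemma e1m : (0%R : int) = (1%:Z - 1)%R. Proof. by []. Qed.
Lemma e2m : (1%R : int) = (2%:Z - 1)%R. Proof. by []. Qed.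

Lemma relm (p : nat) : wat w p = pi (wat (Cm (-1)%R) p) /\ d (wat (Cm (-1)%R) p) != k.+1.
Proof. by rewrite -{1}C0w; apply: (rel_pi (e := 0)). Qed.

Lemma rel1 (p : nat) : wat (Cm 1%R) p = pi (wat w p) /\ d (wat w p) != k.+1.
Proof. by rewrite -!C0w; apply: (rel_pi (e := 1)). Qed.

Lemma transfer (C C' : tupleT) (e : {set 'I_n}) r :
  (forall p, wat C' p = pi (wat C p) /\ d (wat C p) != k.+1) ->
  V k.+1 \notin e -> (e \in H r C) = (pi @: e \in H r C').
Proof.
move=> hC he.
have dx x : x \in e -> d x != k.+1.
  move=> xe; apply/eqP => h; move: he; by rewrite -h Vd xe.
rewrite !inE card_imset; last exact: pi_inj.
congr andb; apply: eq_forallb => p.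
have [hu hdu] := hC p; have [hv hdv] := hC (p + l.*2).
rewrite hu hv.
have kn' := kn.
apply/idP/idP => /set0Pn [y]; rewrite inE => /andP [ye yI]; apply/set0Pn.
  exists (pi y); rewrite inE imset_f //=.
  move: yI; rewrite !in_ci !cdist_d !d_pi -eqarith // ?d_lt //; exact: dx.
case/imsetP: ye => x xe hx; exists x; rewrite inE xe /=.
move: yI; rewrite hx !in_ci !cdist_d !d_pi -eqarith // ?d_lt //; exact: dx.
Qed.

Lemma dC (m : int) e p : m = (e%:Z - 1)%R -> e <= 2 ->
  (blk p -> e <= d (wat (Cm m) p) <= k.-1 + e) /\
  (~~ blk p -> k.+1 < d (wat (Cm m) p)).
Proof.
move=> hm he; split.
  case/existsP => s /eqP hs; rewrite (wat_mod _ hs) (blkV hm) // dV.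
    by have := ltn_ord s; lia.
  by have := ltn_ord s; have := kn; lia.
by move=> hb; rewrite shift_nblk // nblk_d.
Qed.

Lemma blk_cases p : [|| blk p && ~~ blk (p + l.*2), ~~ blk p && blk (p + l.*2)
  | ~~ blk p && ~~ blk (p + l.*2)].
Proof.
have := @blk_both p.
by case: (blk p); case: (blk (p + l.*2)) => //= /(_ isT).
Qed.

Lemma mon1 (e : {set 'I_n}) r : V k.+1 \in e -> e \in H r (Cm (-1)%R) -> e \in H r w.
Proof.
rewrite !inE => he /andP [-> /forallP h] /=; apply/forallP => p.
move: (h p) => /set0Pn [x]; rewrite inE => /andP [xe xI].
have [hu _] := relm p; have [hv _] := relm (p + l.*2).
rewrite hu hv; move: xI; rewrite !in_ci !cdist_d => xI.
have [hb1 hb2] := dC p e0m isT; have [hb3 hb4] := dC (p + l.*2) e0m isT.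
have hc : [|| (d (wat (Cm (-1)%R) p) <= k.-1) && (k.+1 < d (wat (Cm (-1)%R) (p + l.*2))),
   (k.+1 < d (wat (Cm (-1)%R) p)) && (d (wat (Cm (-1)%R) (p + l.*2)) <= k.-1)
 | (k.+1 < d (wat (Cm (-1)%R) p)) && (k.+1 < d (wat (Cm (-1)%R) (p + l.*2)))].
  move: (blk_cases p) => /or3P [/andP [b1 b2]| /andP[b1 b2] | /andP [b1 b2]].
  - by have := hb1 b1; have := hb4 b2; lia.
  - by have := hb2 b1; have := hb3 b2; lia.
  - by have := hb2 b1; have := hb4 b2; lia.
have := mon_ar1 Hk1 kn (d_lt _) (d_lt _) (d_lt x) hc xI.
case/orP => [hx | hk]; apply/set0Pn.
  by exists x; rewrite inE xe in_ci !cdist_d !d_pi.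
exists (V k.+1); rewrite inE he in_ci !cdist_d !d_pi dV //; exact: kn.
Qed.

Lemma mon1' (e : {set 'I_n}) r : V 0 \in e -> e \in H r (Cm 1%R) -> e \in H r w.
Proof.
rewrite !inE => he /andP [-> /forallP h] /=; apply/forallP => p.
move: (h p) => /set0Pn [x]; rewrite inE => /andP [xe xI].
have [hu _] := rel1 p; have [hv _] := rel1 (p + l.*2).
move: xI; rewrite hu hv !in_ci !cdist_d !d_pi => xI.
have [hb1 hb2] := dC p e1m isT; have [hb3 hb4] := dC (p + l.*2) e1m isT.
rewrite C0w in hb1 hb2 hb3 hb4.
have hc : [|| (1 <= d (wat w p) <= k) && (k.+1 < d (wat w (p + l.*2))),
   (k.+1 < d (wat w p)) && (1 <= d (wat w (p + l.*2)) <= k)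
 | (k.+1 < d (wat w p)) && (k.+1 < d (wat w (p + l.*2)))].
  move: (blk_cases p) => /or3P [/andP [b1 b2]| /andP[b1 b2] | /andP [b1 b2]].
  - by have := hb1 b1; have := hb4 b2; lia.
  - by have := hb2 b1; have := hb3 b2; lia.
  - by have := hb2 b1; have := hb4 b2; lia.
have := mon_ar2 Hk1 kn (d_lt _) (d_lt _) (d_lt x) hc xI.
case/orP => [hx | hk]; apply/set0Pn.
  by exists x; rewrite inE xe in_ci !cdist_d.
exists (V 0); rewrite inE he in_ci !cdist_d dV //; exact: npos.
Qed.

Lemma pi_top : pi (V k.+1) = V 0.
Proof. by have := kn => h; rewrite /pi dV // ifF ?eqxx //; lia. Qed.

Lemma inj1 r : exists2 S : {set {set 'I_n}}, #|S| = #|H r (Cm (-1)%R) :\: H r w| &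
  S \subset H r w :\: H r (Cm 1%R) /\ (forall W, W \in S -> V 0 \notin W).
Proof.
exists [set pi @: e | e : {set 'I_n} in H r (Cm (-1)%R) :\: H r w].
  by rewrite card_imset //; apply: imset_inj; exact: pi_inj.
have key (e : {set 'I_n}) : e \in H r (Cm (-1)%R) :\: H r w -> V k.+1 \notin e.
  rewrite in_setD => /andP [eB eA].
  by apply/negP => hk; move: eB; rewrite (mon1 hk eA).
split.
  apply/subsetP => W /imsetP [e he ->]; have hv := key e he.
  move: he; rewrite !in_setD => /andP [eB eA].
  by rewrite -(transfer _ relm hv) eA andbT -(transfer _ rel1 hv) eB.
move=> W /imsetP [e he ->]; have hv := key e he.
apply/imsetP => [[x xe hx]].
have : x = V k.+1 by apply: pi_inj; rewrite -hx pi_top.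
by move=> hx'; move: hv; rewrite -hx' xe.
Qed.

Definition pinv := invF pi_inj.

Lemma inj2 r : exists2 S : {set {set 'I_n}}, #|S| = #|H r (Cm 1%R) :\: H r w| &
  S \subset H r w :\: H r (Cm (-1)%R) /\ (forall W, W \in S -> V k.+1 \notin W).
Proof.
exists [set pinv @: e | e : {set 'I_n} in H r (Cm 1%R) :\: H r w].
  by rewrite card_imset //; apply: imset_inj; apply: (can_inj (f_invF pi_inj)).
have he0 (e : {set 'I_n}) : pi @: (pinv @: e) = e.
  rewrite -imset_comp; apply/setP => x; apply/imsetP/idP.
    by case => y ye /= ->; rewrite f_invF.
  by move=> xe; exists x => //=; rewrite f_invF.
have key (e : {set 'I_n}) : e \in H r (Cm 1%R) :\: H r w -> V k.+1 \notin pinv @: e.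
  rewrite in_setD => /andP [eB eA].
  apply/negP => hk; have := imset_f pi hk; rewrite he0 pi_top => h0.
  by move: eB; rewrite (mon1' h0 eA).
split.
  apply/subsetP => W /imsetP [e he ->]; have hv := key e he.
  move: he; rewrite !in_setD => /andP [eB eA].
  by rewrite (transfer _ relm hv) he0 eB /= (transfer _ rel1 hv) he0 eA.
by move=> W /imsetP [e he ->]; apply: key.
Qed.

Lemma count_ab (T : finType) (A B C : {set T}) :
  #|A| + #|C| + (#|B :\: C| + #|B :\: A|) = #|B| + #|B| + (#|A :\: B| + #|C :\: B|).
Proof.
have h1 := cardsID B A; have h2 := cardsID B C; have h3 := cardsID A B; have h4 := cardsID C B.
rewrite setIC in h3; rewrite setIC in h4; lia.
Qed.

Lemma blk_mod p q : p %% L = q %% L -> blk p = blk q.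
Proof. by move=> h; rewrite /blk h. Qed.

Lemma d_ge1 p : 1 <= d (wat w p).
Proof.
have [hb1 hb2] := dC p e1m isT; rewrite C0w in hb1 hb2.
by case: (boolP (blk p)) => [/hb1|/hb2]; lia.
Qed.

Lemma d_wi : d (wat w i) = 1.
Proof.
have := wblkV Hk1; rewrite muln0 addn0 add0n => ->.
by rewrite dV //; have := kn; lia.
Qed.

Lemma D_adj q : q.+1 < L -> d (wat w (i + 2 * q)) < d (wat w (i + 2 * q.+1)).
Proof.
have [q0 hq0] := sv_sorted Hw.
set y := fun u => val (wat w (2 * u + 1)).
have yper u : y (u + L) = y u.
  rewrite /y; congr val; apply: wat_mod.
  have -> : 2 * (u + L) + 1 = 2 * L + (2 * u + 1) by lia.
  by rewrite modnMDl.
have ylt u : y u < n by rewrite /y ltn_ord.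
have hy t : t.+1 < L -> y (q0 + t) < y (q0 + t.+1) by exact: hq0.
have ymono t t' : t <= t' -> t' < L -> y (q0 + t) <= y (q0 + t').
  elim: t' => [|t' IH] ht ht'; first by have -> : t = 0 by lia.
  case: (ltnP t t'.+1) => h.
    have := IH (ltac:(lia)) (ltac:(lia)); have := hy t' ht'; lia.
  by have -> : t = t'.+1 by lia.
set o0 := c0 %% n.
have exP : exists t, (L <= t) || (o0 <= y (q0 + t)) by exists L; rewrite leqnn.
case: (ex_minnP exP) => c hc hmin.
have cL : c <= L by have := hmin L; rewrite leqnn => /(_ isT).
have below t : t < c -> y (q0 + t) < o0.
  move=> htc; rewrite ltnNge; apply/negP => h.
  by have := hmin t; rewrite h orbT => /(_ isT); lia.
have above t : c <= t -> t < L -> o0 <= y (q0 + t).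
  move=> h1 h2; have cL' : c < L by lia.
  move: hc; rewrite leqNgt cL' /= => hc.
  by apply: leq_trans hc (ymono _ _ h1 h2).
have o0n : o0 < n by rewrite ltn_pmod // npos.
set E := fun t => d (wat w (2 * (q0 + c + t) + 1)).
have EF t : E t = F n o0 (y (q0 + (c + t))) by rewrite /E dE addnA.
have Eadj t : t.+1 < L -> E t < E t.+1.
  move=> ht; rewrite !EF.
  case: (ltnP (c + t.+1) L) => h1.
    have := hy (c + t) (ltac:(lia)); have := above (c + t) (ltac:(lia)) (ltac:(lia)).
    have := above (c + t.+1) (ltac:(lia)) (ltac:(lia)).
    rewrite -addnS /F; repeat case: ifP; lia.
  case: (eqVneq (c + t.+1) L) => h2.
    have -> : q0 + (c + t.+1) = q0 + 0 + L by lia.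
    rewrite yper.
    have := below 0 (ltac:(lia)); have := above (c + t) (ltac:(lia)) (ltac:(lia)).
    have := ylt (q0 + (c + t)); have := ylt (q0 + 0).
    rewrite /F; repeat case: ifP; lia.
  have -> : q0 + (c + t) = q0 + (c + t - L) + L by lia.
  have -> : q0 + (c + t.+1) = q0 + (c + t - L).+1 + L by lia.
  rewrite !yper.
  have := hy (c + t - L) (ltac:(lia)).
  have := below (c + t - L) (ltac:(lia)); have := below (c + t - L).+1 (ltac:(lia)).
  rewrite /F; repeat case: ifP; lia.
have Elt t t' : t < t' -> t' < L -> E t < E t'.
  elim: t' => [|t' IH] // h1 h2.
  case: (ltnP t t') => h3.
    by have := IH h3 (ltac:(lia)); have := Eadj t' h2; lia.
  have -> : t = t' by lia.
  exact: Eadj.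
have [t0 ht0 hi] := exists_q (2 * (q0 + c) + 1) i.
have Et0 : E t0 = 1.
  rewrite /E; transitivity (d (wat w i)); last exact: d_wi.
  congr d; apply: wat_mod; rewrite hi; congr modn; lia.
have t00 : t0 = 0.
  case: (posnP t0) => // h; have := Elt 0 t0 h ht0; rewrite Et0.
  by have := d_ge1 (2 * (q0 + c + 0) + 1); rewrite /E; lia.
move=> hq.
have -> : d (wat w (i + 2 * q)) = E q.
  rewrite /E; congr d; apply: wat_mod; rewrite -modnDml hi t00 modnDml; congr modn; lia.
have -> : d (wat w (i + 2 * q.+1)) = E q.+1.
  rewrite /E; congr d; apply: wat_mod; rewrite -modnDml hi t00 modnDml; congr modn; lia.
exact: Eadj.
Qed.

Lemma D_lt q q' : q < q' -> q' < L -> d (wat w (i + 2 * q)) < d (wat w (i + 2 * q')).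
Proof.
elim: q' => [|q' IH] // h1 h2.
case: (ltnP q q') => h3.
  by have := IH h3 (ltac:(lia)); have := D_adj h2; lia.
have -> : q = q' by lia.
exact: D_adj.
Qed.

Lemma arc_q (p : nat) : exists q, [/\ q < L, p %% L = (i + 2 * q) %% L &
  (p + l.*2) %% L = (i + 2 * (if q <= l then q + l else q - l.+1)) %% L].
Proof.
have [q hq hp] := exists_q i p.
exists q; split => //; rewrite -modnDml hp modnDml.
case: ifP => h; first by congr modn; lia.
have -> : i + 2 * q + l.*2 = 2 * L + (i + 2 * (q - l.+1)) by lia.
by rewrite modnMDl.
Qed.

Lemma D0 : d (wat w (i + 2 * 0)) = 1.
Proof. by rewrite muln0 addn0 d_wi. Qed.

Lemma Dle q q' : q <= q' -> q' < L -> d (wat w (i + 2 * q)) <= d (wat w (i + 2 * q')).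
Proof.
move=> h1 h2; case: (ltnP q q') => h3; first exact: ltnW (D_lt h3 h2).
by have -> : q = q' by lia.
Qed.

Lemma hitW1 (p : nat) :
  [|| o \in closed_int (wat w p) (wat w (p + l.*2)),
      V 1 \in closed_int (wat w p) (wat w (p + l.*2))
    | wat w (i + 2 * l.+1) \in closed_int (wat w p) (wat w (p + l.*2))].
Proof.
have [q [hq h1 h2]] := arc_q p.
have kn' := kn.
rewrite (wat_mod _ h1) (wat_mod _ h2); clear h1 h2.
rewrite !in_ci !cdist_d /o !dV; try lia.
apply: hit1_ar; rewrite ?d_lt //.
case: (leqP q l) => hql.
  case: (posnP q) => [q0|qp].
    by rewrite q0 D0 eqxx.
  have := Dle (q := q) (q' := l.+1) (ltac:(lia)) (ltac:(lia)).
  have := Dle (q := l.+1) (q' := q + l) (ltac:(lia)) (ltac:(lia)).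
  lia.
have := D_lt (q := q - l.+1) (q' := q) (ltac:(lia)) (ltac:(lia)).
lia.
Qed.

Lemma hitW2 (p : nat) :
  (V 1 \in closed_int (wat w p) (wat w (p + l.*2))) ||
  (wat w (i + 2 * l) \in closed_int (wat w p) (wat w (p + l.*2))).
Proof.
have [q [hq h1 h2]] := arc_q p.
have kn' := kn.
rewrite (wat_mod _ h1) (wat_mod _ h2); clear h1 h2.
rewrite !in_ci !cdist_d !dV; try lia.
apply: hit2_ar; rewrite ?d_lt ?d_ge1 //.
case: (leqP q l) => hql.
  have := Dle (q := q) (q' := l) (ltac:(lia)) (ltac:(lia)).
  have := Dle (q := l) (q' := q + l) (ltac:(lia)) (ltac:(lia)).
  lia.
have := D_lt (q := q - l.+1) (q' := q) (ltac:(lia)) (ltac:(lia)).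
have := D_lt (q := 0) (q' := q) (ltac:(lia)) (ltac:(lia)).
rewrite D0; lia.
Qed.

Lemma nblk_l1 : ~~ blk (i + 2 * l.+1).
Proof.
apply/negP => hb; have := blk_both hb.
rewrite (@blk_mod (i + 2 * l.+1 + l.*2) i) ?blk_i //.
have -> : i + 2 * l.+1 + l.*2 = 2 * L + i by lia.
by rewrite modnMDl.
Qed.

Lemma nblk_l : ~~ blk (i + 2 * l).
Proof. by have := blk_both blk_i; rewrite -mul2n. Qed.

Lemma card3 (T : finType) (x y z : T) : #|[set x; y; z]| <= 3.
Proof.
rewrite cardsU cardsU1 !cards1.
by case: (x \notin _); rewrite /=; lia.
Qed.

Lemma wit r : 3 <= r -> 2 * r <= n + 2 ->
  (exists W, W \in H r w :\: H r (Cm 1%R) /\ V 0 \in W) \/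
  (exists W, W \in H r w :\: H r (Cm (-1)%R) /\ V k.+1 \in W).
Proof.
move=> r3 rn.
have kn' := kn.
set a := d (wat w (i + 2 * l)); set b := d (wat w (i + 2 * l.+1)).
have lL : l.+1 < L by lia.
have hab : a < b by apply: D_lt.
have ha : 1 < a by rewrite -D0; apply: D_lt; lia.
have hb : k.+1 < b by apply: nblk_d; exact: nblk_l1.
have an : a < n by apply: d_lt.
have bn : b < n by apply: d_lt.
set K1 := [set x | (a < d x) || (d x <= 1)].
set K2 := [set x | (1 <= d x) && (d x < b)].
have hU : K1 :|: K2 = setT.
  apply/setP => x; rewrite !inE; have := d_lt x; lia.
have hI : V 1 \in K1 :&: K2 by rewrite !inE dV //; lia.
have hsum : n.+1 <= #|K1| + #|K2|.
  rewrite -cardsUI hU cardsT card_ord.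
  have : 0 < #|K1 :&: K2| by apply/card_gt0P; exists (V 1).
  lia.
have np := npos.
case: (leqP r #|K1|) => hK1.
  left.
  set T1 := [set o; V 1; wat w (i + 2 * l.+1)].
  have hT : T1 \subset K1.
    apply/subsetP => x; rewrite !inE => /orP [/orP [] | ] /eqP ->; rewrite /o ?dV //; lia.
  have hTc : #|T1| <= r by apply: leq_trans (card3 _ _ _) _; lia.
  have [W [s1 s2 s3]] := extend hT hTc hK1.
  exists W; split; last by apply: (subsetP s1); rewrite !inE eqxx.
  rewrite in_setD; apply/andP; split.
    rewrite inE; apply/negP => /andP [_ /forallP h].
    have := h (Ordinal (ltn_pmod i LP)) => /set0Pn [x]; rewrite inE => /andP [xW].
    rewrite /= (@wat_mod _ (i %% L) i) ?modn_mod //.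
    rewrite (@wat_mod _ (i %% L + l.*2) (i + 2 * l)); last by rewrite modnDml -mul2n.
    have := blkV e2m isT Hk1; rewrite muln0 addn0 => ->.
    rewrite shift_nblk ?nblk_l // in_ci !cdist_d (@dV (0 + 2)); last lia.
    rewrite -/a.
    have := subsetP s2 x xW; rewrite inE.
    move=> h1 h2; move: h1 h2; rewrite /F; repeat case: ifP; lia.
  rewrite inE s3 eqxx /=; apply/forallP => p; apply/set0Pn.
  have := hitW1 p => /or3P [] hx; [exists o | exists (V 1) | exists (wat w (i + 2 * l.+1))];
    rewrite inE hx andbT; apply: (subsetP s1); rewrite !inE eqxx ?orbT //.
right.
have hK2 : r <= #|K2| by lia.
set T2 := [set V k.+1; V 1; wat w (i + 2 * l)].
have hT : T2 \subset K2.
  apply/subsetP => x; rewrite !inE => /orP [/orP [] | ] /eqP ->; rewrite ?dV //; lia.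
have hTc : #|T2| <= r by apply: leq_trans (card3 _ _ _) _; lia.
have [W [s1 s2 s3]] := extend hT hTc hK2.
exists W; split; last by apply: (subsetP s1); rewrite !inE eqxx.
rewrite in_setD; apply/andP; split.
  rewrite inE; apply/negP => /andP [_ /forallP h].
  have := h (Ordinal (ltn_pmod (i + 2 * l.+1) LP)) => /set0Pn [x]; rewrite inE => /andP [xW].
  rewrite /= (@wat_mod _ ((i + 2 * l.+1) %% L) (i + 2 * l.+1)) ?modn_mod //.
  rewrite (@wat_mod _ ((i + 2 * l.+1) %% L + l.*2) (i + 2 * 0)); last first.
    rewrite modnDml muln0 addn0.
    have -> : i + 2 * l.+1 + l.*2 = 2 * L + i by lia.
    by rewrite modnMDl.
  rewrite (blkV e0m isT Hk1) shift_nblk ?nblk_l1 // in_ci !cdist_d (@dV (0 + 0)); last lia.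
  rewrite -/b.
  have := subsetP s2 x xW; rewrite inE.
  move=> h1 h2; move: h1 h2; rewrite /F; repeat case: ifP; lia.
rewrite inE s3 eqxx /=; apply/forallP => p; apply/set0Pn.
have := hitW2 p => /orP [] hx; [exists (V 1) | exists (wat w (i + 2 * l))];
  rewrite inE hx andbT; apply: (subsetP s1); rewrite !inE eqxx ?orbT //.
Qed.

Lemma main r : 2 <= r ->
  minn #|H r (Cm (-1)%R)| #|H r (Cm 1%R)| <= #|H r w|
  /\ (3 <= r -> 3 * r - 5 <= n ->
      minn #|H r (Cm (-1)%R)| #|H r (Cm 1%R)| < #|H r w|).
Proof.
move=> r2.
have [S1 hS1 [sS1 nS1]] := inj1 r; have [S2 hS2 [sS2 nS2]] := inj2 r.
have c1 := subset_leq_card sS1; have c2 := subset_leq_card sS2.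
have ct := count_ab (H r (Cm (-1)%R)) (H r w) (H r (Cm 1%R)).
split; first lia.
move=> r3 rn; have := wit r3 (ltac:(lia)).
case => [[W [hW hV]] | [W [hW hV]]].
  have : #|S1| < #|H r w :\: H r (Cm 1%R)|.
    apply: proper_card; apply/properP; split => //; exists W => //.
    by apply/negP => /nS1; rewrite hV.
  lia.
have : #|S2| < #|H r w :\: H r (Cm (-1)%R)|.
  apply: proper_card; apply/properP; split => //; exists W => //.
  by apply/negP => /nS2; rewrite hV.
lia.
Qed.

End Main.

Theorem proposition3p7 (n r l : nat) (w : 'I_(l.*2.+1) -> 'I_n) (i k j : nat) :
  2 <= r -> 1 <= l -> 1 <= k <= l ->
  semi_valid w ->
  consecutive_at w i k j ->
  semi_valid (shiftC w i k j (-1)%R) ->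
  semi_valid (shiftC w i k j 0%R) ->
  semi_valid (shiftC w i k j 1%R) ->
  minn #|H r (shiftC w i k j (-1)%R)| #|H r (shiftC w i k j 1%R)| <= #|H r w|
  /\ (3 <= r -> 3 * r - 5 <= n ->
      minn #|H r (shiftC w i k j (-1)%R)| #|H r (shiftC w i k j 1%R)| < #|H r w|).
Proof.
move=> r2 l1 /andP [k1 kl] Hw Hc Hm H0 H1.
exact: (@main n l w i k j k1 kl Hc Hw Hm H0 H1 r r2).
Qed.
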